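(* Let $x_0,\ldots,x_n\in\mathbb{R}^n$ be such that $P:=\mathrm{conv}\{x_0,\ldots,x_n\}$ is an $n$-simplex with $0\in P^\circ$ (the interior of $P$). For $i=0,\ldots,n$ let $\sigma_i:=\mathrm{cone}\{x_0,\ldots,\hat{x}_i,\ldots,x_n\}$, where $\hat{x}_i$ indicates that $x_i$ is omitted. Let $x\in\mathbb{R}^n$ and fix $i\in\{0,\ldots,n\}$. Then $x\in(-\sigma_i)^\circ$ if and only if $$P':=\mathrm{conv}\{x_0,\ldots,\hat{x}_i,\ldots,x_n,x\}$$ is an $n$-simplex with $0\in {P'}^\circ$, and $\Delta(P')$ is a complete fan.
   Context: For a polytope $Q\subset\mathbb{R}^n$ containing the origin in its interior, $\Delta(Q)$ denotes the fan whose cones are the cones (with apex the origin) over the faces of $Q$. For a cone $\sigma$, $(-\sigma)^\circ$ denotes the interior of $-\sigma=\{-v: v\in\sigma\}$. *)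

(* Defs.v *)
From HB Require Import structures.
From mathcomp Require Import all_boot all_order all_algebra.
From mathcomp Require Import all_classical all_reals all_analysis.
Set Implicit Arguments. Unset Strict Implicit. Unset Printing Implicit Defensive.
Import Order.TTheory GRing.Theory Num.Theory.
Import numFieldNormedType.Exports.
Local Open Scope classical_set_scope.
Local Open Scope ring_scope.

Section Defs.
Variable R : realType.
Variable n : nat.
Notation vec := 'rV[R]_n.

Definition dotv (a y : vec) : R := \sum_(k < n) a 0 k * y 0 k.

Definition conv_hull (m : nat) (v : 'I_m -> vec) : set vec :=
  [set z | exists l : 'I_m -> R, (forall j, 0 <= l j) /\
           \sum_(j < m) l j = 1 /\ z = \sum_(j < m) l j *: v j].

Definition cone_of (m : nat) (P : pred 'I_m) (v : 'I_m -> vec) : set vec :=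
  [set z | exists l : 'I_m -> R, (forall j, 0 <= l j) /\
           z = \sum_(j < m | P j) l j *: v j].

Definition aff_indep (m : nat) (v : 'I_m -> vec) : Prop :=
  forall l : 'I_m -> R, \sum_(j < m) l j = 0 ->
    \sum_(j < m) l j *: v j = 0 -> forall j, l j = 0.

Definition is_n_simplex (S : set vec) : Prop :=
  exists v : 'I_n.+1 -> vec, aff_indep v /\ S = conv_hull v.

(* faces of a polytope Q (intersections with supporting hyperplanes,
   including Q itself and possibly the empty face) *)
Definition is_face (Q F : set vec) : Prop :=
  exists (a : vec) (b : R), (forall y, Q y -> dotv a y <= b) /\
    F = Q `&` [set y | dotv a y = b].

(* the cone with apex the origin over a set F (cone over the empty face = {0}) *)
Definition cone_over (F : set vec) : set vec :=
  [set z | z = 0 \/ exists t y, 0 <= t /\ F y /\ z = t *: y].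

Definition Delta (Q : set vec) : set (set vec) :=
  [set C | exists F, is_face Q F /\ C = cone_over F].

Definition complete_fan (D : set (set vec)) : Prop :=
  \bigcup_(C in D) C = setT.

Definition neg_set (S : set vec) : set vec := [set - y | y in S].

End Defs.

Definition replace_at (T : Type) (m : nat) (v : 'I_m -> T) (i : 'I_m) (x : T)
  : 'I_m -> T := fun j => if j == i then x else v j.

(* Main.v *)
Require Import Defs.
From HB Require Import structures.
From mathcomp Require Import all_boot all_order all_algebra.
From mathcomp Require Import all_classical all_reals all_analysis.
From mathcomp Require Import ring lra.
Import Order.TTheory GRing.Theory Num.Theory.
Import numFieldNormedType.Exports.
Local Open Scope classical_set_scope.
Local Open Scope ring_scope.
Set Implicit Arguments. Unset Strict Implicit. Unset Printing Implicit Defensive.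
Section Aux.
Variable R : realType.
Variable n : nat.
Local Notation vec := 'rV[R]_n.

Lemma int0P (A : set vec) : interior A 0 ->
  exists2 e : R, 0 < e & forall z, `|z| < e -> A z.
Proof. by move=> /nbhs_norm0P [e e0 H]; exists e. Qed.

Lemma intxP (A : set vec) x :
  (exists2 e : R, 0 < e & forall y, `|x - y| < e -> A y) -> interior A x.
Proof. move=> [e e0 H]; rewrite /interior /= -nbhs_nbhs_norm; exists e => //. Qed.

Lemma small_scale (w : vec) (e : R) : 0 < e -> exists2 d : R, 0 < d & `|d *: w| < e.
Proof.
move=> e0; have w0 : 0 <= `|w| by [].
exists (e / (2 * (`|w| + 1))).
  by apply: divr_gt0 => //; apply: mulr_gt0 => //; lra.
rewrite normrZ ger0_norm; last by apply: divr_ge0; [lra| apply: mulr_ge0; lra].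
rewrite mulrAC ltr_pdivrMr; last by apply: mulr_gt0; lra.
nra.
Qed.

Lemma single_le (m : nat) (a : 'I_m -> R) j : (forall k, 0 <= a k) -> a j <= \sum_k a k.
Proof.
move=> H; rewrite (bigD1 j) //= lerDl; exact: sumr_ge0.
Qed.

Lemma pos_upper (m : nat) (f : 'I_m -> R) : exists C, forall j, f j <= C.
Proof.
exists (\sum_k `|f k|) => j; apply: le_trans (real_ler_norm _) _ => //.
  exact: num_real.
exact: (@single_le _ (fun k => `|f k|) j (fun k => normr_ge0 _)).
Qed.

Lemma pos_lower (m : nat) (f : 'I_m -> R) : (forall j, 0 < f j) ->
  exists2 c, 0 < c & forall j, c <= f j.
Proof.
move=> fp; have [C HC] := @pos_upper _ (fun j => (f j)^-1).
have C0 : forall j, 0 < (f j)^-1 by move=> j; rewrite invr_gt0.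
have nC := normr_ge0 C.
exists (1 + `|C|)^-1; first by rewrite invr_gt0; lra.
move=> j; have := HC j; have := C0 j; have := fp j; have : C <= `|C| by apply: real_ler_norm; exact: num_real.
move=> h1 h2 h3 h4.
rewrite -[f j]invrK lef_pV2 ?posrE //; try lra.
Qed.
End Aux.

Section Aux2.
Variable R : realType.
Variable n : nat.
Local Notation vec := 'rV[R]_n.

Lemma posrel (m : nat) (ys : 'I_m -> vec) : interior (conv_hull ys) 0 ->
  exists2 l : 'I_m -> R, (forall j, 0 < l j) & \sum_j l j *: ys j = 0.
Proof.
move=> /int0P [e e0 H].
have [d d0 hd] := small_scale (\sum_j ys j) e0.
have : conv_hull ys (- (d *: \sum_j ys j)) by apply: H; rewrite normrN.
case=> a [a0 [a1 ha]].
exists (fun j => a j + d) => [j|]; first by have := a0 j; lra.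
under eq_bigr do rewrite scalerDl.
by rewrite big_split /= -ha -scaler_sumr addNr.
Qed.

Lemma sum_off (m : nat) (i : 'I_m) (c : 'I_m -> R) (ys : 'I_m -> vec) :
  \sum_j c j *: ys j = c i *: ys i + \sum_(j | j != i) c j *: ys j.
Proof. by rewrite (bigD1 i). Qed.

Lemma span_others (xs : 'I_n.+1 -> vec) i : interior (conv_hull xs) 0 ->
  forall z, exists e : 'I_n.+1 -> R, z = \sum_(j | j != i) e j *: xs j.
Proof.
move=> hint z; have [l lp hl] := posrel hint; have [e e0 H] := int0P hint.
have [d d0 hd] := small_scale z e0.
have [a [a0 [a1 ha]]] := H _ hd.
have E1 : \sum_(j | j != i) l j *: xs j = - (l i *: xs i).
  by apply/eqP; rewrite -addr_eq0 addrC -sum_off hl.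
have E2 : \sum_(j | j != i) a j *: xs j = d *: z - a i *: xs i.
  by rewrite ha (sum_off i) addrC addKr.
have li0 : l i != 0 by rewrite gt_eqF ?lp.
have d0' : d != 0 by rewrite gt_eqF.
exists (fun j => (a j - a i * l j / l i) / d).
have -> : \sum_(j | j != i) ((a j - a i * l j / l i) / d) *: xs j =
   d^-1 *: (\sum_(j | j != i) a j *: xs j - (a i / l i) *: \sum_(j | j != i) l j *: xs j).
  rewrite scaler_sumr -sumrB scaler_sumr; apply: eq_bigr => j _.
  rewrite scalerA -scalerBl scalerA; congr (_ *: _); field; exact/andP.
rewrite E1 E2 scalerN opprK scalerA divfK // subrK scalerA mulVf // scale1r //.
Qed.
End Aux2.

Section Aux3.
Variable R : realType.
Variable n : nat.
Local Notation vec := 'rV[R]_n.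

Lemma lin_indep (xs : 'I_n.+1 -> vec) i : interior (conv_hull xs) 0 ->
  forall c : 'I_n.+1 -> R, \sum_(j | j != i) c j *: xs j = 0 ->
  forall j, j != i -> c j = 0.
Proof.
move=> hint.
pose Y : 'M[R]_n := \matrix_(k, l) xs (lift i k) 0 l.
have rowY k : row k Y = xs (lift i k) by apply/rowP => l; rewrite !mxE.
have sumlift (c : 'I_n.+1 -> R) :
    \sum_(j | j != i) c j *: xs j = (\row_k c (lift i k)) *m Y.
  apply: (@addrI _ (c i *: xs i)); rewrite -sum_off.
  rewrite (bigD1_ord i (P := predT)) //= mulmx_sum_row; congr (_ + _).
  by apply: eq_bigr => k _; rewrite rowY mxE.
have full : row_full Y.
  apply/row_fullP.
  have /choice [E HE] : forall k : 'I_n, exists e : 'I_n.+1 -> R,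
      row k (1%:M : 'M[R]_n) = \sum_(j | j != i) e j *: xs j.
    by move=> k; apply: span_others.
  exists (\matrix_(k, l) E k (lift i l)).
  apply/row_matrixP => k; rewrite row_mul HE sumlift; congr (_ *m _).
  by apply/rowP => l; rewrite !mxE.
have unitY : Y \in unitmx by rewrite -row_full_unit.
move=> c hc j hj.
have h0 : (\row_k c (lift i k)) = 0.
  by rewrite -[\row_k _](mulmxK unitY) -sumlift hc mul0mx.
rewrite eq_sym in hj; have [k -> _] := unlift_some hj.
by have := congr1 (fun M : 'rV[R]_n => M 0 k) h0; rewrite !mxE.
Qed.
End Aux3.

Section Aux4.
Variable R : realType.
Variable n : nat.
Local Notation vec := 'rV[R]_n.

Lemma int_transfer (m : nat) (ys ws : 'I_m -> vec) (kap : 'I_m -> R) :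
  interior (conv_hull ys) 0 -> (forall k, 0 < kap k) -> \sum_k kap k *: ws k = 0 ->
  (forall j, exists g : 'I_m -> R, (forall k, 0 <= g k) /\ ys j = \sum_k g k *: ws k) ->
  interior (conv_hull ws) 0.
Proof.
move=> hint kp hk /choice [G HG].
have G0 j k : 0 <= G j k by case: (HG j) => + _; apply.
have [rho rho0 H] := int0P hint.
have [a' [_ [a1' _]]] : conv_hull ys 0 by apply: H; rewrite normr0.
case: m ys ws kap hint kp hk G HG G0 H a' a1' => [|m] ys ws kap hint kp hk G HG G0 H a' a1'.
  by move: a1'; rewrite big_ord0 => /eqP; rewrite eq_sym oner_eq0.
pose K := 1 + \sum_j \sum_k G j k.
have SG0 : 0 <= \sum_j \sum_k G j k by apply: sumr_ge0 => j _; apply: sumr_ge0.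
have K0 : 0 < K by rewrite /K; lra.
apply: intxP; exists (rho / K); first exact: divr_gt0.
move=> y; rewrite sub0r normrN => hy.
have : `|K *: y| < rho by rewrite normrZ gtr0_norm // mulrC -ltr_pdivlMr.
move=> /H [a [a0 [a1 ha]]].
pose b k := (\sum_j a j * G j k) / K.
have b0 k : 0 <= b k.
  by apply: divr_ge0; [apply: sumr_ge0 => j _; apply: mulr_ge0 | lra].
have yb : y = \sum_k b k *: ws k.
  have -> : y = K^-1 *: (K *: y) by rewrite scalerA mulVf ?scale1r // gt_eqF.
  rewrite ha.
  have -> : \sum_j a j *: ys j = \sum_k (\sum_j a j * G j k) *: ws k.
    under eq_bigr do rewrite (proj2 (HG _)) scaler_sumr.
    rewrite exchange_big /=; apply: eq_bigr => k _; rewrite scaler_suml.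
    by apply: eq_bigr => j _; rewrite scalerA.
  by rewrite scaler_sumr; apply: eq_bigr => k _; rewrite scalerA mulrC.
have sb : \sum_k b k <= 1.
  rewrite -mulr_suml ler_pdivrMr // mul1r exchange_big /=.
  apply: (@le_trans _ _ (\sum_j \sum_k G j k)); last by rewrite /K lerDr.
  apply: ler_sum => j _; apply: ler_sum => k _.
  apply: ler_piMl => //; rewrite -a1; exact: single_le.
pose S := \sum_k kap k.
have S0 : 0 < S.
  apply: (@lt_le_trans _ _ (kap ord0)) => //.
  exact: (@single_le _ _ kap ord0 (fun k => ltW (kp k))).
pose t := (1 - \sum_k b k) / S.
have t0 : 0 <= t by apply: divr_ge0; lra.
exists (fun k => b k + t * kap k); split; [|split].
- by move=> k; apply: addr_ge0 (b0 k) (mulr_ge0 t0 (ltW (kp k))).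
- by rewrite big_split /= -mulr_sumr -/S /t divfK ?gt_eqF // addrC subrK.
- under eq_bigr do rewrite scalerDl.
  rewrite big_split /= -yb.
  have -> : \sum_k (t * kap k) *: ws k = t *: \sum_k kap k *: ws k.
    by rewrite scaler_sumr; apply: eq_bigr => k _; rewrite scalerA.
  by rewrite hk scaler0 addr0.
Qed.
End Aux4.

Section Aux5.
Variable R : realType.
Variable n : nat.
Local Notation vec := 'rV[R]_n.

Lemma intxP' (A : set vec) x : interior A x ->
  exists2 e : R, 0 < e & forall y, `|x - y| < e -> A y.
Proof. by rewrite /interior -nbhs_nbhs_norm => -[e e0 H]; exists e. Qed.

Lemma fan_of_int (Q : set vec) : interior Q 0 -> complete_fan (Delta Q).
Proof.
move=> /int0P [e e0 H]; rewrite /complete_fan; apply/seteqP; split => // y _.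
have dot0 z : dotv 0 z = 0 by rewrite /dotv big1 // => k _; rewrite mxE mul0r.
exists (cone_over Q).
  exists Q; split => //; exists 0, 0; split; first by move=> z _; rewrite dot0.
  by apply/seteqP; split => z /=; [move=> Qz; split => //; rewrite dot0 | case].
right; have [d d0 hd] := small_scale y e0.
exists d^-1, (d *: y); split; first by rewrite invr_ge0 ltW.
by split; [exact: H | rewrite scalerA mulVf ?scale1r // gt_eqF].
Qed.

Lemma sum_repl (m : nat) (xs : 'I_m -> vec) i x (c : 'I_m -> R) :
  \sum_j c j *: replace_at xs i x j = c i *: x + \sum_(j | j != i) c j *: xs j.
Proof.
rewrite (sum_off i) /replace_at eqxx; congr (_ + _).
by apply: eq_bigr => j hj; rewrite (negbTE hj).
Qed.

End Aux5.

Section Aux7.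
Variable R : realType.
Variable n : nat.
Local Notation vec := 'rV[R]_n.

Lemma fwd (xs : 'I_n.+1 -> vec) i x :
  interior (conv_hull xs) 0 ->
  interior (neg_set (cone_of (fun j => j != i) xs)) x ->
  aff_indep (replace_at xs i x) /\ interior (conv_hull (replace_at xs i x)) 0.
Proof.
move=> hint hx; have [l lp hl] := posrel hint.
have [eps eps0 Heps] := intxP' hx.
pose T := \sum_(j | j != i) xs j.
have [d d0 hd] := small_scale T eps0.
have : neg_set (cone_of (fun j => j != i) xs) (x + d *: T).
  by apply: Heps; rewrite opprD addrA subrr add0r normrN.
case=> z [c [c0 ->]] hz.
pose kap j := if j == i then 1 else c j + d.
have kp j : 0 < kap j by rewrite /kap; case: eqP => // _; have := c0 j; lra.
have hk : \sum_j kap j *: replace_at xs i x j = 0.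
  rewrite sum_repl /kap eqxx scale1r.
  have -> : \sum_(j | j != i) (if j == i then 1 else c j + d) *: xs j
      = \sum_(j | j != i) c j *: xs j + d *: T.
    rewrite /T scaler_sumr -big_split /=; apply: eq_bigr => j hj.
    by rewrite (negbTE hj) scalerDl.
  by rewrite -[x](addrK (d *: T)) -hz /= -opprD addNr.
split.
- move=> L hL0 hLv.
  pose cc j := L j - L i * kap j.
  have hcc : \sum_(j | j != i) cc j *: xs j = 0.
    have : \sum_j cc j *: replace_at xs i x j = 0.
      under eq_bigr do rewrite scalerBl -scalerA.
      by rewrite sumrB -scaler_sumr hk scaler0 hLv subr0.
    by rewrite sum_repl /cc /kap eqxx mulr1 subrr scale0r add0r.
  have hL j : L j = L i * kap j.
    have [->|hj] := eqVneq j i; first by rewrite /kap eqxx mulr1.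
    by apply/eqP; rewrite -subr_eq0; apply/eqP; exact: (lin_indep hint hcc hj).
  have Li0 : L i = 0.
    have : L i * \sum_j kap j = 0.
      by rewrite mulr_sumr -[X in _ = X]hL0; apply: eq_bigr => j _; rewrite -hL.
    have : 0 < \sum_j kap j.
      apply: (@lt_le_trans _ _ (kap i)) => //.
      exact: (@single_le _ _ kap i (fun k => ltW (kp k))).
    by move=> h /eqP; rewrite mulf_eq0 (gt_eqF h) orbF => /eqP.
  by move=> j; rewrite hL Li0 mul0r.
- apply: (int_transfer hint kp hk) => j.
  have [->|hj] := eqVneq j i; last first.
    exists (fun k => if k == j then 1 else 0); split; first by move=> k; case: eqP.
    rewrite (sum_off j) eqxx scale1r big1 ?addr0; last by move=> k hk'; rewrite (negbTE hk') scale0r.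
    by rewrite /replace_at (negbTE hj).
  have [C HC] := pos_upper (fun k => l k / l i).
  have [cl cl0 hcl] := pos_lower kp.
  have li0 : 0 < l i by [].
  have C0 : 1 <= C by have := HC i; rewrite mulfV ?gt_eqF.
  pose al := C / cl.
  exists (fun k => al * kap k - (if k == i then 0 else l k / l i)); split.
    move=> k.
    have h1 : C <= al * kap k.
      rewrite /al mulrAC ler_pdivlMr //; apply: ler_wpM2l; [lra | exact: hcl].
    have h2 : 0 < l k / l i by apply: divr_gt0.
    have := HC k; case: eqP => _; lra.
  under eq_bigr do rewrite scalerBl -scalerA.
  rewrite sumrB -scaler_sumr hk scaler0 sub0r sum_repl eqxx scale0r add0r.
  have -> : \sum_(j | j != i) (if j == i then 0 else l j / l i) *: xs j
      = (l i)^-1 *: \sum_(j | j != i) l j *: xs j.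
    rewrite scaler_sumr; apply: eq_bigr => k hk2.
    by rewrite (negbTE hk2) scalerA mulrC.
  have -> : \sum_(j | j != i) l j *: xs j = - (l i *: xs i).
    by apply/eqP; rewrite -addr_eq0 addrC -sum_off hl.
  by rewrite scalerN opprK scalerA mulVf ?gt_eqF // scale1r.
Qed.

End Aux7.

Section Aux6.
Variable R : realType.
Variable n : nat.
Local Notation vec := 'rV[R]_n.

Lemma bwd (xs : 'I_n.+1 -> vec) i x :
  interior (conv_hull (replace_at xs i x)) 0 ->
  interior (neg_set (cone_of (fun j => j != i) xs)) x.
Proof.
move=> hint'; have [kap kp hk] := posrel hint'; have [r r0 Hr] := int0P hint'.
rewrite sum_repl in hk.
have ki0 : kap i != 0 by rewrite gt_eqF.
pose mu j := kap j / kap i.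
have mup j : 0 < mu j by apply: divr_gt0.
pose U := \sum_(j | j != i) mu j *: xs j.
have hx : x = - U.
  have -> : x = (kap i)^-1 *: (kap i *: x) by rewrite scalerA mulVf ?scale1r.
  have -> : kap i *: x = - \sum_(j | j != i) kap j *: xs j.
    by apply/eqP; rewrite -addr_eq0 hk.
  rewrite scalerN scaler_sumr /U; congr (- _); apply: eq_bigr => j _.
  by rewrite scalerA mulrC.
have [c c0 hc] := pos_lower mup.
pose m0 := c / 2.
have m00 : 0 < m0 by rewrite /m0; lra.
apply: intxP; exists (r * m0); first exact: mulr_gt0.
move=> y hy.
pose p := m0^-1 *: (y - x).
have : `|p| < r.
  rewrite normrZ gtr0_norm ?invr_gt0 // distrC in hy *.
  by rewrite mulrC ltr_pdivrMr.
move=> /Hr [a [a0 [a1 ha]]].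
rewrite sum_repl in ha.
pose W := \sum_(j | j != i) a j *: xs j.
have hy' : y = x + m0 *: p.
  by rewrite /p scalerA mulfV ?gt_eqF // scale1r addrC subrK.
pose nu j := if j == i then 0 else (1 + m0 * a i) * mu j - m0 * a j.
exists (\sum_(j | j != i) nu j *: xs j).
  exists nu; split.
    move=> j; rewrite /nu; case: eqP => // _.
    have := hc j; have := a0 i; have := mup j.
    have : a j <= 1 by rewrite -a1; exact: single_le.
    have hm : c = 2 * m0 by rewrite /m0; field.
    move=> h1 h2 h3 h4.
    have t1 : 0 <= m0 * a i * mu j by apply: mulr_ge0; [apply: mulr_ge0; lra | lra].
    have t2 : m0 * a j <= m0 by apply: ler_piMr; [lra | exact: h1].
    rewrite mulrDl mul1r; lra.
  by [].
have -> : \sum_(j | j != i) nu j *: xs j = (1 + m0 * a i) *: U - m0 *: W.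
  rewrite /U /W !scaler_sumr -sumrB; apply: eq_bigr => j hj.
  by rewrite /nu (negbTE hj) scalerBl !scalerA.
rewrite hy' ha -/W hx; apply/rowP => k; rewrite !mxE; ring.
Qed.

End Aux6.

Unset Implicit Arguments.

Theorem lemma3p1 (R : realType) (n : nat) (xs : 'I_n.+1 -> 'rV[R]_n)
  (i : 'I_n.+1) (x : 'rV[R]_n) :
  is_n_simplex (conv_hull xs) -> interior (conv_hull xs) 0 ->
  (interior (neg_set (cone_of (fun j => j != i) xs)) x <->
   [/\ is_n_simplex (conv_hull (replace_at xs i x)),
       interior (conv_hull (replace_at xs i x)) 0 &
       complete_fan (Delta (conv_hull (replace_at xs i x)))]).
Proof.
move=> hs hint; split.
- move=> hx; have [ha hi] := fwd hint hx; split => //.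
    by exists (replace_at xs i x).
  exact: fan_of_int.
- by case=> _ hi _; apply: bwd.
Qed.
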